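(* Let $\Omega \subset \mathbb{R}^N$ be closed and nonempty, let $p>1$, $\mu>0$, and let $f(x) := \frac{\mu}{p} d_\Omega(x)^p$. Then (1) $f$ is globally $p$-conditioned with constant $\mu$: for all $x\in\mathbb{R}^N$, $\frac{\mu}{p} d_{\operatorname{argmin} f}(x)^p \le f(x)-\inf f$; (2) $f$ is globally $p$-submetric regular with constant $\mu$: for all $x\in\mathbb{R}^N$ and all $x^*\in\partial_L f(x)$, $\mu\, d_{\operatorname{argmin} f}(x)^{p-1}\le \|x^*\|$.
   Context: For a closed set $S\subset\mathbb{R}^N$ (not necessarily convex), $d_S(x) := \inf_{y\in S}\|y-x\|$ (Euclidean norm). For $g:\mathbb{R}^N\to\mathbb{R}$, the Fréchet subdifferential $\partial_F g(x)$ is the set of $x^*$ with $\liminf_{y\to x} \frac{g(y)-g(x)-\langle x^*,y-x\rangle}{\|y-x\|}\ge 0$; the limiting subdifferential $\partial_L g(x)$ is the set of $x^*$ for which there exist $x_n\to x$ and $x_n^*\to x^*$ with $g(x_n)\to g(x)$ and $x_n^*\in\partial_F g(x_n)$. *)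

(* Defs.v *)
From HB Require Import structures.
From mathcomp Require Import all_boot all_order all_algebra.
From mathcomp Require Import all_classical all_reals all_analysis.
Set Implicit Arguments. Unset Strict Implicit. Unset Printing Implicit Defensive.
Import Order.TTheory GRing.Theory Num.Theory numFieldNormedType.Exports.
Local Open Scope classical_set_scope.
Local Open Scope ring_scope.

Section Defs.
Context {R : realType} {N : nat}.
Notation V := 'rV[R]_N.

Definition edot (x y : V) : R := \sum_(i < N) x ord0 i * y ord0 i.
Definition enorm (x : V) : R := Num.sqrt (edot x x).

Definition dist_set (S : set V) (x : V) : R := inf [set enorm (y - x) | y in S].

Definition argmin_set (g : V -> R) : set V := [set x | forall y, g x <= g y].
Definition inf_val (g : V -> R) : R := inf (range g).

(* Frechet subdifferential: liminf_{y->x} (g y - g x - <x*, y-x>)/||y-x|| >= 0,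
   written out with epsilon/delta. *)
Definition frechet_subdiff (g : V -> R) (x : V) : set V :=
  [set xs | forall e : R, 0 < e -> exists d : R, 0 < d /\
     forall y : V, 0 < enorm (y - x) -> enorm (y - x) < d ->
       - e * enorm (y - x) <= g y - g x - edot xs (y - x)].

Definition econv (u : nat -> V) (l : V) : Prop :=
  forall e : R, 0 < e -> exists M : nat, forall n, (M <= n)%N -> enorm (u n - l) < e.

Definition limiting_subdiff (g : V -> R) (x : V) : set V :=
  [set xs | exists (u : nat -> V) (us : nat -> V),
     [/\ econv u x, econv us xs, (fun n => g (u n) : R^o) @ \oo --> (g x : R^o) &
         forall n, us n \in frechet_subdiff g (u n)]].
End Defs.

(* Main.v *)
Require Import Defs.
From HB Require Import structures.
From mathcomp Require Import all_boot all_order all_algebra.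
From mathcomp Require Import all_classical all_reals all_analysis.
From mathcomp Require Import ring lra.
Import Order.TTheory GRing.Theory Num.Theory numFieldNormedType.Exports.
Local Open Scope classical_set_scope.
Local Open Scope ring_scope.

Section Aux.
Context {R : realType} {N : nat}.
Notation V := 'rV[R]_N.
Implicit Types x y z : V.

Lemma edotC x y : edot x y = edot y x.
Proof. by apply: eq_bigr => i _; rewrite mulrC. Qed.

Lemma edotDl x y z : edot (x + y) z = edot x z + edot y z.
Proof. by rewrite /edot -big_split; apply: eq_bigr => i _; rewrite !mxE mulrDl. Qed.

Lemma edotZl (a : R) x y : edot (a *: x) y = a * edot x y.
Proof. by rewrite /edot mulr_sumr; apply: eq_bigr => i _; rewrite !mxE mulrA. Qed.

Lemma edotNl x y : edot (- x) y = - edot x y.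
Proof. by rewrite -scaleN1r edotZl mulN1r. Qed.

Lemma edotBl x y z : edot (x - y) z = edot x z - edot y z.
Proof. by rewrite edotDl edotNl. Qed.

Lemma edotDr x y z : edot z (x + y) = edot z x + edot z y.
Proof. by rewrite !(edotC z) edotDl. Qed.

Lemma edotZr (a : R) x y : edot y (a *: x) = a * edot y x.
Proof. by rewrite !(edotC y) edotZl. Qed.

Lemma edotBr x y z : edot z (x - y) = edot z x - edot z y.
Proof. by rewrite !(edotC z) edotBl. Qed.

Lemma edot_ge0 x : 0 <= edot x x.
Proof. by apply: sumr_ge0 => i _; rewrite -expr2 sqr_ge0. Qed.

Lemma enorm_ge0 x : 0 <= enorm x.
Proof. exact: sqrtr_ge0. Qed.

Lemma enorm_sq x : enorm x ^+ 2 = edot x x.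
Proof. by rewrite sqr_sqrtr // edot_ge0. Qed.

Lemma CS2 x y : edot x y ^+ 2 <= edot x x * edot y y.
Proof.
have Q : forall l : R, 0 <= l ^+ 2 * edot x x - 2 * l * edot x y + edot y y.
  move=> l; have := edot_ge0 (l *: x - y).
  rewrite !edotBl !edotBr !edotZl !edotZr (edotC y x).
  by move=> h; apply: le_trans h _; rewrite le_eqVlt; apply/orP; left; apply/eqP; ring.
have X0 := edot_ge0 x; have Y0 := edot_ge0 y.
have [Xp|] := ltP 0 (edot x x).
  have := Q (edot x y / edot x x).
  set X := edot x x; set Z := edot x y; set Y := edot y y => h.
  have E : (Z / X) ^+ 2 * X - 2 * (Z / X) * Z + Y = Y - Z ^+ 2 / X.
    by field; rewrite gt_eqF.
  by move: h; rewrite E subr_ge0 ler_pdivrMr // mulrC.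
move=> X0'; have Xe : edot x x = 0 by apply/eqP; rewrite eq_le X0' X0.
rewrite Xe mul0r.
have [Z0|Zn] := eqVneq (edot x y) 0; first by rewrite Z0 expr0n.
have := Q ((edot y y + 1) / (2 * edot x y)).
rewrite Xe mulr0 add0r.
have E : 2 * ((edot y y + 1) / (2 * edot x y)) * edot x y = edot y y + 1.
  by field.
rewrite E; lra.
Qed.

Lemma CS x y : `|edot x y| <= enorm x * enorm y.
Proof.
rewrite -(@ler_pXn2r _ 2) ?nnegrE ?mulr_ge0 ?enorm_ge0 //.
by rewrite exprMn !enorm_sq real_normK ?num_real // CS2.
Qed.

Lemma enorm_tri x y : enorm (x + y) <= enorm x + enorm y.
Proof.
rewrite -(@ler_pXn2r _ 2) ?nnegrE ?addr_ge0 ?enorm_ge0 //.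
rewrite enorm_sq edotDl !edotDr sqrrD !enorm_sq (edotC y x).
have := CS x y; have := ler_norm (edot x y); lra.
Qed.

Lemma enormZ (a : R) x : enorm (a *: x) = `|a| * enorm x.
Proof. by rewrite /enorm edotZl edotZr mulrA -expr2 sqrtrM ?sqr_ge0 // sqrtr_sqr. Qed.

Lemma enormN x : enorm (- x) = enorm x.
Proof. by rewrite -scaleN1r enormZ normrN normr1 mul1r. Qed.




Lemma pow_upper (s p : R) : 0 <= s < 1 -> 0 <= p -> (1 - s) `^ p * (1 + p * s) <= 1.
Proof.
move=> /andP[s0 s1] p0.
rewrite /powR gt_eqF ?subr_gt0 //.
have h1 : ln (1 - s) <= - s by rewrite le_ln1Dx // ltrNl opprK (le_lt_trans _ s1) // lerN10.
have h2 : expR (p * ln (1 - s)) <= expR (- (p * s)).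
  by rewrite ler_expR -mulrN ler_wpM2l.
rewrite expRN in h2.
have h4 := expR_ge1Dx (p * s).
have E : 0 < expR (p * s) by apply: expR_gt0.
apply: (le_trans (ler_wpM2r _ h2)); first by rewrite addr_ge0 // mulr_ge0.
rewrite ler_pdivrMl // mulr1; exact: h4.
Qed.

Lemma pow_lower (e q : R) : 0 <= e < 1 -> 0 <= q -> 1 - q * e / (1 - e) <= (1 - e) `^ q.
Proof.
move=> /andP[e0 e1] q0.
have d0 : 0 < 1 - e by rewrite subr_gt0.
rewrite /powR gt_eqF //.
have h1 : - (e / (1 - e)) <= ln (1 - e).
  have := @le_ln1Dx R (e / (1 - e)).
  have -> : 1 + e / (1 - e) = (1 - e)^-1 by field; rewrite gt_eqF.
  rewrite lnV ?posrE // lerNl => -> //.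
  by apply: lt_le_trans (divr_ge0 e0 (ltW d0)); rewrite ltrN10.
apply: le_trans (expR_ge1Dx _).
rewrite -mulrA lerD2l; have := ler_wpM2l q0 h1; rewrite mulrN; apply: le_trans.
by [].
Qed.

Lemma small_lim (a b K t0 : R) : 0 < t0 ->
  (forall t, 0 < t -> t < t0 -> a - b <= t * K) -> a <= b.
Proof.
move=> t00 H; rewrite leNgt; apply/negP => ab.
have [K0|Kp] := leP K 0.
  have := H (t0 / 2); rewrite divr_gt0 // ltr_pdivrMr // => /(_ isT).
  have : t0 < t0 * 2 by rewrite ltr_pMr // ltr1n.
  move=> h /(_ h) h'; have : t0 / 2 * K <= 0 by rewrite mulr_ge0_le0 // divr_ge0 // ltW.
  lra.
set t := Order.min (t0 / 2) ((a - b) / (2 * K)).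
have tp : 0 < t by rewrite lt_min !divr_gt0 ?subr_gt0 // mulr_gt0.
have tt0 : t < t0.
  apply: (@le_lt_trans _ _ (t0/2)); first by rewrite ge_min lexx.
  rewrite ltr_pdivrMr // ltr_pMr // ltr1n //.
have := H t tp tt0.
have : t * K <= (a - b) / (2 * K) * K by rewrite ler_pM2r // ge_min lexx orbT.
have -> : (a - b) / (2 * K) * K = (a - b) / 2 by field; rewrite gt_eqF.
lra.
Qed.


Lemma dist_ge0 (S : set V) x : S !=set0 -> 0 <= dist_set S x.
Proof.
move=> [y Sy]; apply: lb_le_inf; first by exists (enorm (y - x)), y.
by move=> _ [z _ <-]; apply: enorm_ge0.
Qed.

Lemma dist_le (S : set V) x y : S y -> dist_set S x <= enorm (y - x).
Proof.
move=> Sy; apply: ge_inf; last by exists y.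
by exists 0 => _ [z _ <-]; apply: enorm_ge0.
Qed.

Lemma dist_approx (S : set V) x (e : R) : S !=set0 -> 0 < e ->
  exists2 y, S y & enorm (y - x) < dist_set S x + e.
Proof.
move=> [y0 Sy0] e0.
have := @inf_lt R [set enorm (y - x) | y in S] (dist_set S x + e).
case.
- by exists (enorm (y0 - x)), y0.
- by rewrite ltrDl.
by move=> _ [y Sy <-] h; exists y.
Qed.

Lemma dist_lip (S : set V) x z : S !=set0 ->
  dist_set S x <= dist_set S z + enorm (z - x).
Proof.
move=> [y0 Sy0]; rewrite -lerBlDr; apply: lb_le_inf; first by exists (enorm (y0 - z)), y0.
move=> _ [y Sy <-]; rewrite lerBlDr.
apply: le_trans (@dist_le S x y Sy) _.
have -> : y - x = (y - z) + (z - x) by rewrite addrA subrK.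
exact: enorm_tri.
Qed.

Lemma dist_mono (A B : set V) x : A `<=` B -> A !=set0 ->
  dist_set B x <= dist_set A x.
Proof.
move=> AB [y0 Ay0]; apply: lb_le_inf; first by exists (enorm (y0 - x)), y0.
by move=> _ [y Ay <-]; apply: dist_le; apply: AB.
Qed.

Lemma dist0 (S : set V) x : S x -> dist_set S x = 0.
Proof.
move=> Sx; apply/eqP; rewrite eq_le dist_ge0; last by exists x.
rewrite andbT; apply: le_trans (@dist_le S x x Sx) _; rewrite subrr /enorm /edot big1 ?sqrtr0 // => i _; rewrite mxE mul0r.
by [].
Qed.


Lemma ar_half : (1 / 2 : R) < 1.
Proof. lra. Qed.

Lemma ar_tc (d t c : R) : 0 <= d -> 0 < t -> t < 1/2 -> c <= d * (1 + t ^+ 2) ->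
  t * c <= t * (2 * d).
Proof.
move=> d0 t0 th h; rewrite ler_pM2l //; apply: le_trans h _; rewrite expr2.
have h2 : d * (t * t) <= d * 1 by rewrite ler_wpM2l //; nra.
lra.
Qed.

Lemma ar_s (t : R) : 0 < t -> t < 1/2 -> 0 <= t - t ^+ 2 < 1.
Proof. move=> t0 th; apply/andP; split; rewrite expr2; nra. Qed.

Lemma ar_dut (d t c : R) : 0 <= d -> 0 < t -> t < 1/2 -> c <= d * (1 + t ^+ 2) ->
  (1 - t) * c <= d * (1 - (t - t ^+ 2)).
Proof.
move=> d0 t0 th h.
have : (1 - t) * c <= (1 - t) * (d * (1 + t ^+ 2)) by rewrite ler_wpM2l //; lra.
have : 0 <= d * t ^+ 3 by rewrite mulr_ge0 // exprn_ge0 // ltW.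
rewrite !exprS expr0; nra.
Qed.

Lemma ar_F1 (e t c A X Z m DP Q: R) :
  - e * (t * c) <= m * A - m * DP - t * Z ->
  m * A <= m * (DP * Q) -> t * - Z <= t * (X * c) ->
  m * DP * (1 - Q) <= t * c * (e + X).
Proof. move=> h1 h2 h3; lra. Qed.

Lemma ar_G1 (m d P Q t b : R) : 0 < d ->
  m * (d * P) * (1 - Q) <= t * (d * (1 + t ^+ 2)) * b ->
  m * P * (1 - Q) <= t * (1 + t ^+ 2) * b.
Proof.
move=> d0 h; rewrite -(ler_pM2l d0).
have E1 : d * (m * P * (1 - Q)) = m * (d * P) * (1 - Q) by ring.
have E2 : d * (t * (1 + t ^+ 2) * b) = t * (d * (1 + t ^+ 2)) * b by ring.
by rewrite E1 E2.
Qed.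

Lemma ar_G2 (mP Q ps T : R) : 0 <= mP -> 0 <= ps -> Q * (1 + ps) <= 1 ->
  mP * (1 - Q) <= T -> mP * ps <= T * (1 + ps).
Proof.
move=> h0 h1 h2 h3.
have h4 : mP * (1 - Q) * (1 + ps) <= T * (1 + ps) by rewrite ler_wpM2r //; lra.
have h5 : ps <= (1 - Q) * (1 + ps) by lra.
have h6 : mP * ps <= mP * ((1 - Q) * (1 + ps)) by rewrite ler_wpM2l.
lra.
Qed.

Lemma ar_G3 (a t b p T : R) : 0 < t -> t < 1/2 -> 0 <= b -> 0 <= p ->
  a * (t - t ^+ 2) <= t * (1 + t ^+ 2) * b * (1 + p * (t - t ^+ 2)) ->
  a * (1 - t) <= (1 + t ^+ 2) * (1 + p * t) * b.
Proof.
move=> t0 th b0 p0 h.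
have E1 : a * (t - t ^+ 2) = t * (a * (1 - t)) by ring.
have E2 : t * (1 + t ^+ 2) * b * (1 + p * (t - t ^+ 2)) =
  t * ((1 + t ^+ 2) * b * (1 + p * (t - t ^+ 2))) by ring.
move: h; rewrite E1 E2 ler_pM2l // => h; apply: le_trans h _.
have h1 : 1 + p * (t - t ^+ 2) <= 1 + p * t.
  by rewrite lerD2l ler_wpM2l // lerBlDr lerDl exprn_ge0 // ltW.
have h2 : 0 <= (1 + t ^+ 2) * b by rewrite mulr_ge0 // addr_ge0 // exprn_ge0 // ltW.
by rewrite [_ * (1 + p * t) * b]mulrAC ler_wpM2l.
Qed.

Lemma frechet_bound (Omega : set V) (p mu : R) (u xs : V) :
  Omega !=set0 -> 1 < p -> 0 < mu ->
  xs \in frechet_subdiff (fun x => mu / p * (dist_set Omega x) `^ p) u ->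
  mu * (dist_set Omega u) `^ (p - 1) <= enorm xs.
Proof.
move=> hne hp hmu; rewrite in_setE => Hxs.
have p0 : 0 < p by apply: lt_trans hp.
set d := dist_set Omega u.
have d0 : 0 <= d by apply: dist_ge0.
have [dz|dp] := eqVneq d 0.
  by rewrite dz powR0 ?mulr0 ?enorm_ge0 // subr_eq0 gt_eqF.
have {dp} dp : 0 < d by rewrite lt_def dp d0.
set P := d `^ (p - 1).
have P0 : 0 < P by apply: powR_gt0.
have dpE : d `^ p = d * P by rewrite /P mulr_powRB1.
set X := enorm xs.
have X0 : 0 <= X by apply: enorm_ge0.
apply: (@small_lim _ _ 1 1) => // e e0 e1.
rewrite mulr1 lerBlDl.
have [d1 [d1p Hd1]] := Hxs e e0.
set a := mu * P; set b := e + X.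
have a0 : 0 <= a by rewrite mulr_ge0 // ltW.
have b0 : 0 <= b by rewrite addr_ge0 // ltW.
pose t0 := Order.min (1/2) (d1 / (2 * d)).
have t0p : 0 < t0 by rewrite lt_min; apply/andP; split; apply: divr_gt0 => //; rewrite mulr_gt0.
apply: (@small_lim _ _ (a + (2 * p + 1) * b) t0) => // t t0' tt0.
have th : t < 1/2 by apply: lt_le_trans tt0 _; rewrite ge_min lexx.
have td : t < d1 / (2 * d) by apply: lt_le_trans tt0 _; rewrite ge_min lexx orbT.
suff key : a * (1 - t) <= (1 + t ^+ 2) * (1 + p * t) * b.
  have h1 : t ^+ 2 <= t by rewrite expr2 ger_pMr //; lra.
  have h2 : (1 + t ^+ 2) * (1 + p * t) <= 1 + (2 * p + 1) * t.
    have : p * t * t ^+ 2 <= p * t * t by rewrite ler_pM2l // mulr_gt0.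
    have : p * t * t <= p * t by rewrite ger_pMr ?mulr_gt0 //; lra.
    lra.
  have h3 := ler_wpM2r b0 h2.
  have -> : X + e = b by rewrite /b addrC.
  nra.
have eta0 : 0 < d * t ^+ 2 by rewrite mulr_gt0 // exprn_gt0.
have [y Oy yc] := @dist_approx Omega u _ hne eta0.
set w := y - u; set c := enorm w.
have dc : d <= c by apply: dist_le.
have cle : c <= d * (1 + t ^+ 2) by rewrite mulrDr mulr1 ltW.
set ut := u + t *: w.
have E1 : ut - u = t *: w by rewrite /ut addrAC subrr add0r.
have E2 : y - ut = (1 - t) *: w by rewrite /ut /w scalerBl scale1r opprD addrA.
have c_tc : enorm (ut - u) = t * c by rewrite E1 enormZ ger0_norm // ltW.
have tcpos : 0 < t * c by rewrite mulr_gt0 // (lt_le_trans dp).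
have tcd1 : t * c < d1.
  apply: le_lt_trans (@ar_tc _ _ _ d0 t0' th cle : t * c <= _) _.
  by rewrite -ltr_pdivlMr ?mulr_gt0.
have Hf := Hd1 ut; rewrite c_tc in Hf; have {Hf} Hf := Hf tcpos tcd1.
rewrite E1 edotZr in Hf.
set s := t - t ^+ 2.
have s0 : 0 <= s < 1 by apply: ar_s.
have s1 : 0 <= 1 - s by case/andP: s0 => _ h; rewrite subr_ge0 ltW.
have dut : dist_set Omega ut <= d * (1 - s).
  apply: le_trans (@dist_le Omega ut y Oy) _.
  rewrite E2 enormZ ger0_norm; last by rewrite subr_ge0 ltW // (lt_trans th) //; apply: ar_half.
  exact: ar_dut.
set Q := (1 - s) `^ p.
have Q0 : 0 <= Q by apply: powR_ge0.
have HQ : Q * (1 + p * s) <= 1 by apply: pow_upper => //; apply: ltW.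
have fut : dist_set Omega ut `^ p <= d * P * Q.
  rewrite -dpE /Q -powRM //.
  apply: ge0_ler_powR => //; first exact: ltW.
  - by rewrite nnegrE dist_ge0.
  - by rewrite nnegrE mulr_ge0.
have CSb : - edot xs w <= X * c.
  by apply: le_trans (CS xs w); rewrite -normrN ler_norm.
rewrite dpE in Hf.
set m := mu / p.
have m0 : 0 < m by rewrite divr_gt0.
have mp : m * p = mu by rewrite /m mulrVK ?unitfE ?gt_eqF.
have F0 : m * dist_set Omega ut `^ p <= m * (d * P * Q) by rewrite ler_pM2l.
have F0' : t * - edot xs w <= t * (X * c) by rewrite ler_pM2l.
have F1 := @ar_F1 _ _ _ _ _ _ _ _ _ Hf F0 F0'.
have F2 : t * c * (e + X) <= t * (d * (1 + t ^+ 2)) * (e + X).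
  by rewrite ler_wpM2r ?ler_wpM2l // ltW.
have G1 := @ar_G1 _ _ _ _ _ _ dp (le_trans F1 F2).
have G2 := @ar_G2 _ _ (p * s) _ (ltW (mulr_gt0 m0 P0)) (mulr_ge0 (ltW p0) (proj1 (andP s0))) HQ G1.
have E : m * P * (p * s) = a * s by rewrite /a -mp; ring.
rewrite E in G2.
exact: ar_G3 t0' th b0 (ltW p0) G2.
Qed.


Lemma ar_H (e q : R) : 0 < e -> e < 1/2 -> 0 <= q -> 1 - 2 * q * e <= 1 - q * e / (1 - e).
Proof.
move=> e0 eh q0.
have : q * e / (1 - e) <= 2 * q * e.
  rewrite ler_pdivrMr; last by lra.
  have : 0 <= q * e by rewrite mulr_ge0 // ltW.
  nra.
lra.
Qed.

Lemma ar_fin (A X q e D B : R) : A * (1 - 2 * q * e) <= B -> B <= X + D * e ->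
  A - X <= e * (2 * q * A + D).
Proof. move=> h1 h2; lra. Qed.

End Aux.

Theorem proposition1 (R : realType) (N : nat) (Omega : set 'rV[R]_N)
  (hclosed : closed Omega) (hne : Omega !=set0) (p mu : R)
  (hp : 1 < p) (hmu : 0 < mu) :
  let f := fun x : 'rV[R]_N => mu / p * (dist_set Omega x) `^ p in
  (forall x : 'rV[R]_N,
      mu / p * (dist_set (argmin_set f) x) `^ p <= f x - inf_val f) /\
  (forall (x xs : 'rV[R]_N), xs \in limiting_subdiff f x ->
      mu * (dist_set (argmin_set f) x) `^ (p - 1) <= enorm xs).
Proof.
move=> f.
have p0 : 0 < p by apply: lt_trans hp.
have m0 : 0 < mu / p by rewrite divr_gt0.
have f0 : forall z, 0 <= f z by move=> z; rewrite /f mulr_ge0 ?powR_ge0 // ltW.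
have fO : forall z, Omega z -> f z = 0.
  by move=> z Oz; rewrite /f dist0 // powR0 ?mulr0 // gt_eqF.
have Osub : Omega `<=` argmin_set f by move=> z Oz y; rewrite fO.
have inf0 : inf_val f = 0.
  case: hne => z0 Oz0; apply/eqP; rewrite eq_le; apply/andP; split.
    rewrite -(fO z0 Oz0); apply: ge_inf; last by exists z0.
    by exists 0 => _ [y _ <-].
  by apply: lb_le_inf; [exists (f z0), z0 | move=> _ [y _ <-]].
have dmono : forall x, dist_set (argmin_set f) x <= dist_set Omega x.
  by move=> x; apply: dist_mono.
have dA0 : forall x, 0 <= dist_set (argmin_set f) x.
  by move=> x; apply: dist_ge0; case: hne => z Oz; exists z; apply: Osub.
split.
  move=> x; rewrite inf0 subr0 /f ler_pM2l //.
  apply: ge0_ler_powR; rewrite ?nnegrE ?dA0 ?dist_ge0 ?dmono //; exact: ltW.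
move=> x xs; rewrite in_setE => -[u [us [cu cus _ Hn]]].
have q0 : 0 < p - 1 by rewrite subr_gt0.
apply: le_trans (_ : mu * dist_set Omega x `^ (p - 1) <= _).
  rewrite ler_pM2l //; apply: ge0_ler_powR; rewrite ?nnegrE ?dA0 ?dist_ge0 ?dmono //; exact: ltW.
set d := dist_set Omega x.
have d0 : 0 <= d by apply: dist_ge0.
have [dz|dp] := eqVneq d 0.
  by rewrite dz powR0 ?mulr0 ?enorm_ge0 // gt_eqF.
have {dp} dp : 0 < d by rewrite lt_def dp d0.
set q := p - 1.
set A := mu * d `^ q.
apply: (@small_lim _ _ _ (2 * q * A + d) (1/2)) => // e e0 eh.
have de0 : 0 < d * e by rewrite mulr_gt0.
have [M1 HM1] := cu _ de0.
have [M2 HM2] := cus _ de0.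
set n := maxn M1 M2.
have h1 := HM1 n (leq_maxl _ _).
have h2 := HM2 n (leq_maxr _ _).
have fb := @frechet_bound _ _ Omega p mu (u n) (us n) hne hp hmu (Hn n).
have h3 : enorm (us n) <= enorm xs + d * e.
  have -> : us n = (us n - xs) + xs by rewrite subrK.
  by apply: le_trans (enorm_tri _ _) _; rewrite addrC lerD2l ltW.
have h4 : d * (1 - e) <= dist_set Omega (u n).
  have := @dist_lip _ _ Omega x (u n) hne.
  rewrite -/d; move: h1; lra.
have e1 : 0 <= e < 1 by apply/andP; split; [exact: ltW | lra].
have h5 : (d * (1 - e)) `^ q <= dist_set Omega (u n) `^ q.
  apply: ge0_ler_powR => //; rewrite ?nnegrE ?dist_ge0 //; first exact: ltW.
  by rewrite mulr_ge0 //; lra.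
rewrite powRM in h5; last 2 first.
- exact: d0.
- lra.
have h6 := @pow_lower _ e q e1 (ltW q0).
have h7 := @ar_H _ e q e0 eh (ltW q0).
have h8 : A * (1 - 2 * q * e) <= mu * dist_set Omega (u n) `^ q.
  rewrite /A -mulrA ler_pM2l //; apply: le_trans h5.
  by rewrite ler_wpM2l ?powR_ge0 // (le_trans h7 h6).
by apply: (@ar_fin _ _ _ _ _ _ _ h8 (le_trans fb h3)).
Qed.
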